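(* Let $\varepsilon\in(0,\tfrac14)$ and let $m>1$ be a constant such that $1-\frac1m\le\frac{\mathrm{e}-1}{2\sqrt{\pi}\,\mathrm{e}}\sqrt{\varepsilon}$. Let $F\in\mathrm{Lip}_{\rm loc}(\mathbb{R})$ satisfy $F(p)=\frac1m p^m$ for $p\in[0,1]$ and $F(p)\le p$ for $p\in[-1,0]$, and let $g(x)=\max\{1-|x|,0\}$ for $x\in\mathbb{R}$. Let $u^\varepsilon$ be the viscosity solution of $u^\varepsilon_t+F(u^\varepsilon_x)=\varepsilon u^\varepsilon_{xx}$ in $\mathbb{R}\times(0,\infty)$, $u^\varepsilon(\cdot,0)=g$, and let $u$ be the viscosity solution of $u_t+F(u_x)=0$ in $\mathbb{R}\times(0,\infty)$, $u(\cdot,0)=g$. Then \[ |u^\varepsilon(0,1)-u(0,1)|\ge\frac{\mathrm{e}-1}{2\sqrt{\pi}\,\mathrm{e}}\sqrt{\varepsilon}. \] *)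

(* Defs.v *)
From Stdlib Require Import Reals Lra.
From Coquelicot Require Import Coquelicot.
Open Scope R_scope.

(* Functions of (x,t) are written  w : R -> R -> R,  w x t. *)
Definition dt (w : R -> R -> R) (x t : R) : R := Derive (fun s => w x s) t.
Definition dx (w : R -> R -> R) (x t : R) : R := Derive (fun y => w y t) x.
Definition dxx (w : R -> R -> R) (x t : R) : R := Derive (fun y => dx w y t) x.

Definition C1_test (phi : R -> R -> R) : Prop :=
  forall x t,
    ex_derive (fun s => phi x s) t /\ ex_derive (fun y => phi y t) x /\
    continuity_2d_pt phi x t /\ continuity_2d_pt (dt phi) x t /\
    continuity_2d_pt (dx phi) x t.

Definition C21_test (phi : R -> R -> R) : Prop :=
  C1_test phi /\
  forall x t, ex_derive (fun y => dx phi y t) x /\ continuity_2d_pt (dxx phi) x t.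

Definition loc_max (u phi : R -> R -> R) (x0 t0 : R) : Prop :=
  exists d, 0 < d /\ forall x t, 0 < t -> Rabs (x - x0) < d -> Rabs (t - t0) < d ->
    u x t - phi x t <= u x0 t0 - phi x0 t0.
Definition loc_min (u phi : R -> R -> R) (x0 t0 : R) : Prop :=
  exists d, 0 < d /\ forall x t, 0 < t -> Rabs (x - x0) < d -> Rabs (t - t0) < d ->
    u x0 t0 - phi x0 t0 <= u x t - phi x t.

Definition cont_initial (u : R -> R -> R) (g : R -> R) : Prop :=
  (forall x t, 0 < t -> continuity_2d_pt u x t) /\
  (forall x, u x 0 = g x) /\
  (forall x e, 0 < e -> exists d, 0 < d /\
     forall y s, 0 <= s -> Rabs (y - x) < d -> s < d -> Rabs (u y s - g x) < e).

(* bounded and uniformly continuous on R x [0,oo): the class in which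
   viscosity solutions of the Cauchy problem are unique *)
Definition BUC (u : R -> R -> R) : Prop :=
  (exists M, forall x t, 0 <= t -> Rabs (u x t) <= M) /\
  (forall e, 0 < e -> exists d, 0 < d /\ forall x t y s, 0 <= t -> 0 <= s ->
     Rabs (x - y) < d -> Rabs (t - s) < d -> Rabs (u x t - u y s) < e).

Definition visc_sol_parabolic (eps : R) (F : R -> R) (g : R -> R) (u : R -> R -> R) : Prop :=
  cont_initial u g /\
  (forall phi x0 t0, C21_test phi -> 0 < t0 -> loc_max u phi x0 t0 ->
     dt phi x0 t0 + F (dx phi x0 t0) - eps * dxx phi x0 t0 <= 0) /\
  (forall phi x0 t0, C21_test phi -> 0 < t0 -> loc_min u phi x0 t0 ->
     dt phi x0 t0 + F (dx phi x0 t0) - eps * dxx phi x0 t0 >= 0).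

Definition visc_sol_HJ (F : R -> R) (g : R -> R) (u : R -> R -> R) : Prop :=
  cont_initial u g /\
  (forall phi x0 t0, C1_test phi -> 0 < t0 -> loc_max u phi x0 t0 ->
     dt phi x0 t0 + F (dx phi x0 t0) <= 0) /\
  (forall phi x0 t0, C1_test phi -> 0 < t0 -> loc_min u phi x0 t0 ->
     dt phi x0 t0 + F (dx phi x0 t0) >= 0).

Definition loc_lipschitz (F : R -> R) : Prop :=
  forall K, 0 < K -> exists L, forall p q, Rabs p <= K -> Rabs q <= K ->
    Rabs (F p - F q) <= L * Rabs (p - q).

Definition hat (x : R) : R := Rmax (1 - Rabs x) 0.

(* Main.v *)
Require Import Defs.
From Stdlib Require Import Reals Lra Psatz ClassicalEpsilon.
From Coquelicot Require Import Coquelicot.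
Open Scope R_scope.

Lemma incr_of_deriv (f df : R -> R) a b : a <= b ->
  (forall x, a <= x <= b -> is_derive f x (df x)) ->
  (forall x, a <= x <= b -> 0 <= df x) -> f a <= f b.
Proof.
  intros Hab Hd Hp.
  destruct (MVT_gen f a b df) as [c [Hc Heq]].
  - intros x Hx. apply Hd. rewrite Rmin_left in Hx by lra. rewrite Rmax_right in Hx by lra. lra.
  - intros x Hx. rewrite Rmin_left in Hx by lra. rewrite Rmax_right in Hx by lra.
    apply continuity_pt_filterlim. apply (ex_derive_continuous (K:=R_AbsRing) (V:=R_NormedModule)).
    eexists; apply Hd; lra.
  - rewrite Rmin_left in Hc by lra. rewrite Rmax_right in Hc by lra.
    assert (0 <= df c) by (apply Hp; lra). nra.
Qed.

Lemma decr_of_deriv (f df : R -> R) a b : a <= b ->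
  (forall x, a <= x <= b -> is_derive f x (df x)) ->
  (forall x, a <= x <= b -> df x <= 0) -> f b <= f a.
Proof.
  intros Hab Hd Hp.
  assert (H := incr_of_deriv (fun x => - f x) (fun x => - df x) a b Hab).
  assert (- f a <= - f b); [|lra].
  apply H.
  - intros x Hx. apply (is_derive_opp f x (df x)). now apply Hd.
  - intros x Hx. specialize (Hp x Hx). lra.
Qed.

Lemma exp_upper4 y : 0 <= y -> exp (-y) <= 1 - y + y^2/2 - y^3/6 + y^4/24.
Proof.
  intros Hy.
  assert (H: exp 0 * (1 - 0 + 0^2/2 - 0^3/6 + 0^4/24) <= exp y * (1 - y + y^2/2 - y^3/6 + y^4/24)).
  { apply (incr_of_deriv (fun y => exp y * (1 - y + y^2/2 - y^3/6 + y^4/24))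
           (fun y => exp y * (y^4/24))); [lra| |].
    - intros x _. auto_derive; auto. field.
    - intros x _. apply Rmult_le_pos. apply Rlt_le, exp_pos. nra. }
  rewrite exp_0 in H.
  assert (exp (-y) * exp y = 1) by (rewrite <- exp_plus; replace (-y+y) with 0 by ring; apply exp_0).
  assert (0 < exp (-y)) by apply exp_pos.
  nra.
Qed.

Lemma exp_lower_odd3 y : 0 <= y -> 1 - y + y^2/2 - y^3/6 <= exp (-y).
Proof.
  intros Hy.
  assert (H: exp y * (1 - y + y^2/2 - y^3/6) <= exp 0 * (1 - 0 + 0^2/2 - 0^3/6)).
  { apply (decr_of_deriv (fun y => exp y * (1 - y + y^2/2 - y^3/6))
           (fun y => exp y * (- y^3/6))); [lra| |].
    - intros x _. auto_derive; auto. field.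
    - intros x Hx. assert (0 < exp x) by apply exp_pos. assert (0 <= x^3) by (apply pow_le; lra). nra. }
  rewrite exp_0 in H.
  assert (exp (-y) * exp y = 1) by (rewrite <- exp_plus; replace (-y+y) with 0 by ring; apply exp_0).
  assert (0 < exp (-y)) by apply exp_pos.
  nra.
Qed.

Lemma exp_lower_odd9 y : 0 <= y ->
  1 - y + y^2/2 - y^3/6 + y^4/24 - y^5/120 + y^6/720 - y^7/5040 + y^8/40320 - y^9/362880 <= exp (-y).
Proof.
  intros Hy.
  assert (H: exp y * (1 - y + y^2/2 - y^3/6 + y^4/24 - y^5/120 + y^6/720 - y^7/5040 + y^8/40320 - y^9/362880)
     <= exp 0 * (1 - 0 + 0^2/2 - 0^3/6 + 0^4/24 - 0^5/120 + 0^6/720 - 0^7/5040 + 0^8/40320 - 0^9/362880)).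
  { apply (decr_of_deriv (fun y => exp y * (1 - y + y^2/2 - y^3/6 + y^4/24 - y^5/120 + y^6/720 - y^7/5040 + y^8/40320 - y^9/362880))
           (fun y => exp y * (- y^9/362880))); [lra| |].
    - intros x _. auto_derive; auto. field.
    - intros x Hx. assert (0 < exp x) by apply exp_pos. assert (0 <= x^9) by (apply pow_le; lra). nra. }
  rewrite exp_0 in H.
  assert (exp (-y) * exp y = 1) by (rewrite <- exp_plus; replace (-y+y) with 0 by ring; apply exp_0).
  assert (0 < exp (-y)) by apply exp_pos.
  nra.
Qed.

Lemma exp_lower_taylor9 y : 0 <= y ->
  1 + y + y^2/2 + y^3/6 + y^4/24 + y^5/120 + y^6/720 + y^7/5040 + y^8/40320 + y^9/362880 <= exp y.
Proof.
  intros Hy.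
  assert (H: exp (-y) * (1 + y + y^2/2 + y^3/6 + y^4/24 + y^5/120 + y^6/720 + y^7/5040 + y^8/40320 + y^9/362880)
     <= exp (-0) * (1 + 0 + 0^2/2 + 0^3/6 + 0^4/24 + 0^5/120 + 0^6/720 + 0^7/5040 + 0^8/40320 + 0^9/362880)).
  { apply (decr_of_deriv (fun y => exp (-y) * (1 + y + y^2/2 + y^3/6 + y^4/24 + y^5/120 + y^6/720 + y^7/5040 + y^8/40320 + y^9/362880))
           (fun y => exp (-y) * (- y^9/362880))); [lra| |].
    - intros x _. auto_derive; auto. field.
    - intros x Hx. assert (0 < exp (-x)) by apply exp_pos. assert (0 <= x^9) by (apply pow_le; lra). nra. }
  replace (-0) with 0 in H by ring. rewrite exp_0 in H.
  assert (exp (-y) * exp y = 1) by (rewrite <- exp_plus; replace (-y+y) with 0 by ring; apply exp_0).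
  assert (0 < exp y) by apply exp_pos.
  nra.
Qed.

Lemma e_bounds : 2.71828 <= exp 1 <= 2.71829.
Proof.
  split.
  - pose proof (exp_lower_taylor9 1 ltac:(lra)). lra.
  - pose proof (exp_lower_odd9 1 ltac:(lra)).
    assert (exp (-(1)) * exp 1 = 1) by (rewrite <- exp_plus; replace (-(1)+1) with 0 by ring; apply exp_0).
    assert (0 < exp 1) by apply exp_pos.
    set (q := 1 - 1 + 1 ^ 2 / 2 - 1 ^ 3 / 6 + 1 ^ 4 / 24 - 1 ^ 5 / 120 + 1 ^ 6 / 720 - 1 ^ 7 / 5040 + 1 ^ 8 / 40320 - 1 ^ 9 / 362880) in *.
    assert (q * exp 1 <= exp (-(1)) * exp 1) by (apply Rmult_le_compat_r; lra).
    assert (Hq: q = 16687/45360) by (unfold q; field). rewrite Hq in *. lra.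
Qed.
Lemma is_derive_eq (f : R -> R) x l1 l2 : is_derive f x l1 -> l1 = l2 -> is_derive f x l2.
Proof. intros H ->; exact H. Qed.

Lemma exp_le_exp x y : x <= y -> exp x <= exp y.
Proof. intros [H|H]. apply Rlt_le, exp_increasing, H. subst; lra. Qed.

Definition Eg (x:R) := RInt (fun u => exp (-(u*u))) 0 x.
Definition Bq : R := 0.9315.

Lemma gauss_cont z : continuous (fun u => exp (-(u*u))) z.
Proof. apply continuity_pt_filterlim. reg. Qed.

Lemma Eg_deriv x : is_derive Eg x (exp (-(x*x))).
Proof.
  unfold Eg. apply (is_derive_RInt (fun u => exp (-(u*u))) _ 0 x).
  - apply filter_forall. intros y. apply (RInt_correct (V:=R_CompleteNormedModule)).
    apply (ex_RInt_continuous (V:=R_CompleteNormedModule)). intros z _. apply gauss_cont.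
  - apply gauss_cont.
Qed.

Lemma ex_derive_Eg x : ex_derive Eg x.
Proof. eexists; apply Eg_deriv. Qed.
Ltac side := repeat (match goal with |- _ /\ _ => split end); try apply ex_derive_Eg; auto.

Lemma Derive_Eg x : Derive Eg x = exp (-(x*x)).
Proof. apply is_derive_unique, Eg_deriv. Qed.
Lemma Derive_Eg' x : Derive (fun y => Eg y) x = exp (-(x*x)).
Proof. apply Derive_Eg. Qed.
Lemma Eg_cont x : continuity_pt Eg x.
Proof. apply continuity_pt_filterlim. apply (ex_derive_continuous (K:=R_AbsRing) (V:=R_NormedModule)). apply ex_derive_Eg. Qed.

Lemma Eg_0 : Eg 0 = 0.
Proof. unfold Eg. apply (RInt_point (V:=R_CompleteNormedModule)). Qed.

Lemma Eg_incr a b : a <= b -> Eg a <= Eg b.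
Proof.
  intros Hab. apply (incr_of_deriv Eg (fun x => exp (-(x*x))) a b Hab).
  - intros; apply Eg_deriv.
  - intros; apply Rlt_le, exp_pos.
Qed.

Lemma Eg_odd_pos x : 0 <= x -> Eg (-x) = - Eg x.
Proof.
  intros Hx.
  assert (Hd : forall y, 0 <= y <= x -> is_derive (fun y => Eg y + Eg (-y)) y 0).
  { intros y _.
    evar (d : R). replace 0 with d.
    - apply (is_derive_plus (K:=R_AbsRing) (V:=R_NormedModule)). apply Eg_deriv.
      apply (is_derive_comp (K:=R_AbsRing) (V:=R_NormedModule) Eg (fun y => -y)).
      apply Eg_deriv. apply (is_derive_opp (K:=R_AbsRing) (V:=R_NormedModule) (fun y => y)). apply (is_derive_id (K:=R_AbsRing)).
    - unfold d. simpl. unfold plus, scal, opp, one; simpl. unfold mult; simpl. 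
      replace (- y * - y) with (y*y) by ring. ring. }
  assert (H1 := incr_of_deriv _ _ 0 x Hx Hd (fun _ _ => Rle_refl 0)).
  assert (H2 := decr_of_deriv _ _ 0 x Hx Hd (fun _ _ => Rle_refl 0)).
  simpl in H1, H2. replace (-0) with 0 in H1, H2 by ring. rewrite Eg_0 in H1, H2. lra.
Qed.

Lemma Eg_odd x : Eg (-x) = - Eg x.
Proof.
  destruct (Rle_dec 0 x). now apply Eg_odd_pos.
  pose proof (Eg_odd_pos (-x) ltac:(lra)). rewrite Ropp_involutive in H. lra.
Qed.

Lemma Eg_1_le : Eg 1 <= 1 - 1/3 + 1/10 - 1/42 + 1/216.
Proof.
  set (p := fun x => x - x^3/3 + x^5/10 - x^7/42 + x^9/216).
  assert (H : p 0 - Eg 0 <= p 1 - Eg 1).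
  { apply (incr_of_deriv (fun x => p x - Eg x)
       (fun x => (1 - x^2 + x^4/2 - x^6/6 + x^8/24) - exp (-(x*x)))); [lra| |].
    - intros x _. unfold p.
      apply (is_derive_minus (K:=R_AbsRing) (V:=R_NormedModule)).
      + auto_derive; auto. field.
      + apply Eg_deriv.
    - intros x _. pose proof (exp_upper4 (x*x) ltac:(nra)).
      assert ((x*x)^2 = x^4) by ring. assert ((x*x)^3 = x^6) by ring.
      assert ((x*x)^4 = x^8) by ring. assert (x*x = x^2) by ring. lra. }
  unfold p in H. rewrite Eg_0 in H. lra.
Qed.

Lemma Eg_ge1 x : 1 <= x -> Eg x <= Eg 1 + exp (-(1)) / 2.
Proof.
  intros Hx.
  assert (H : Eg x + exp (-(x*x))/2 <= Eg 1 + exp (-(1*1))/2).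
  { apply (decr_of_deriv (fun x => Eg x + exp (-(x*x))/2)
       (fun x => exp (-(x*x)) * (1 - x))); [lra| |].
    - intros y _. auto_derive; [side|].
      rewrite Derive_Eg'. field.
    - intros y Hy. pose proof (exp_pos (-(y*y))). nra. }
  replace (1*1) with 1 in H by ring. pose proof (exp_pos (-(x*x))). lra.
Qed.

Lemma Eg_ub x : Eg x <= Bq.
Proof.
  pose proof Eg_1_le. pose proof e_bounds.
  assert (exp (-(1)) * exp 1 = 1) by (rewrite <- exp_plus; replace (-(1)+1) with 0 by ring; apply exp_0).
  assert (exp (-(1)) <= 0.36788).
  { assert (exp (-(1)) * exp 1 <= 0.36788 * exp 1) by lra. 
    apply Rmult_le_reg_r with (exp 1). apply exp_pos. lra. }
  unfold Bq.
  destruct (Rle_dec 1 x).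
  - pose proof (Eg_ge1 x r). lra.
  - destruct (Rle_dec 0 x).
    + pose proof (Eg_incr x 1 ltac:(lra)). lra.
    + pose proof (Eg_incr x 0 ltac:(lra)). rewrite Eg_0 in H3. lra.
Qed.

Lemma Eg_abs x : Rabs (Eg x) <= Bq.
Proof.
  apply Rabs_le. split.
  - pose proof (Eg_ub (-x)). rewrite Eg_odd in H. lra.
  - apply Eg_ub.
Qed.
Definition Gf (z:R) := z * Eg z + exp (-(z*z)) / 2.
Definition Qs (s w : R) := s * Gf (w / s).
Definition Vs (s y : R) := Qs s (y+1) - 2 * Qs s y + Qs s (y-1).
Definition DVs (s y : R) := Eg ((y+1)/s) - 2 * Eg (y/s) + Eg ((y-1)/s).
Definition D2Vs (s y : R) := (exp (-(((y+1)/s)*((y+1)/s))) - 2 * exp (-((y/s)*(y/s)))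
   + exp (-(((y-1)/s)*((y-1)/s)))) / s.

Lemma Gf_deriv z : is_derive Gf z (Eg z).
Proof. unfold Gf. auto_derive; [side|]. rewrite Derive_Eg'. field. Qed.
Lemma ex_derive_Gf z : ex_derive Gf z.
Proof. eexists; apply Gf_deriv. Qed.
Lemma Derive_Gf' z : Derive (fun y => Gf y) z = Eg z.
Proof. apply is_derive_unique, Gf_deriv. Qed.

Lemma Gf_even z : Gf (-z) = Gf z.
Proof. unfold Gf. rewrite Eg_odd. replace (- z * - z) with (z*z) by ring. ring. Qed.

Lemma Qs_even s w : Qs s (-w) = Qs s w.
Proof. unfold Qs. replace (-w/s) with (-(w/s)) by (unfold Rdiv; ring). now rewrite Gf_even. Qed.

Lemma Vs_even s y : Vs s (-y) = Vs s y.
Proof.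
  unfold Vs. replace (-y+1) with (-(y-1)) by ring. replace (-y-1) with (-(y+1)) by ring.
  rewrite !Qs_even. ring.
Qed.

Lemma Vs_deriv s y : 0 < s -> is_derive (Vs s) y (DVs s y).
Proof.
  intros Hs. unfold Vs, Qs, DVs. auto_derive.
  - repeat split; try apply ex_derive_Gf; lra.
  - rewrite !Derive_Gf'. unfold Rdiv, Rminus. field. lra.
Qed.

Lemma DVs_deriv s y : 0 < s -> is_derive (DVs s) y (D2Vs s y).
Proof.
  intros Hs. unfold DVs, D2Vs. auto_derive.
  - repeat split; try apply ex_derive_Eg; lra.
  - rewrite !Derive_Eg'. unfold Rdiv, Rminus. field. lra.
Qed.

Lemma Eg_diff a b : b <= a -> 0 <= Eg a - Eg b <= 2 * Bq.
Proof.
  intros H. pose proof (Eg_incr b a H). pose proof (Eg_abs a). pose proof (Eg_abs b).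
  apply Rabs_le_between in H1. apply Rabs_le_between in H2. lra.
Qed.

Lemma DVs_bound s y : 0 < s -> Rabs (DVs s y) <= 2 * Bq.
Proof.
  intros Hs. unfold DVs.
  assert (y/s <= (y+1)/s) by (apply Rmult_le_compat_r; [apply Rlt_le, Rinv_0_lt_compat; lra| lra]).
  assert ((y-1)/s <= y/s) by (apply Rmult_le_compat_r; [apply Rlt_le, Rinv_0_lt_compat; lra| lra]).
  pose proof (Eg_diff _ _ H). pose proof (Eg_diff _ _ H0).
  apply Rabs_le. lra.
Qed.

Lemma DVs_sign s y : 0 < s -> 0 <= y -> DVs s y <= 0.
Proof.
  intros Hs Hy. set (x0 := y/s). set (h := 1/s).
  assert (Hx0 : 0 <= x0) by (unfold x0; apply Rmult_le_pos; [lra|apply Rlt_le, Rinv_0_lt_compat; lra]).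
  assert (Hh : 0 <= h) by (unfold h; apply Rmult_le_pos; [lra|apply Rlt_le, Rinv_0_lt_compat; lra]).
  assert (E1 : (y+1)/s = x0 + h) by (unfold x0, h; field; lra).
  assert (E2 : (y-1)/s = x0 - h) by (unfold x0, h; field; lra).
  unfold DVs. rewrite E1, E2. fold x0.
  assert (H := decr_of_deriv (fun z => Eg (x0 + z) + Eg (x0 - z) - 2 * Eg x0)
     (fun z => exp (-((x0+z)*(x0+z))) - exp (-((x0-z)*(x0-z)))) 0 h Hh).
  simpl in H. replace (x0 + 0) with x0 in H by ring. replace (x0 - 0) with x0 in H by ring.
  assert (Eg (x0 + h) + Eg (x0 - h) - 2 * Eg x0 <= Eg x0 + Eg x0 - 2 * Eg x0); [|lra].
  apply H.
  - intros z _. auto_derive; [side|]. rewrite !Derive_Eg'. unfold Rminus. ring.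
  - intros z Hz. assert (exp (- ((x0 + z) * (x0 + z))) <= exp (- ((x0 - z) * (x0 - z)))); [|lra].
    destruct (Req_dec (x0*z) 0) as [E|E].
    + replace ((x0 + z) * (x0 + z)) with ((x0 - z) * (x0 - z)) by nra. lra.
    + apply Rlt_le, exp_increasing. nra.
Qed.

Lemma Vs_decr s a b : 0 < s -> 0 <= a <= b -> Vs s b <= Vs s a.
Proof.
  intros Hs Hab. apply (decr_of_deriv (Vs s) (DVs s) a b); [lra| |].
  - intros; now apply Vs_deriv.
  - intros; apply DVs_sign; lra.
Qed.

Lemma Gf_0 : Gf 0 = 1/2.
Proof. unfold Gf. rewrite Eg_0. replace (-(0*0)) with 0 by ring. rewrite exp_0. field. Qed.

Lemma Gf_lin z : 0 <= z -> Gf z <= Gf 0 + Bq * z.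
Proof.
  intros Hz.
  assert (H := incr_of_deriv (fun z => Bq * z - Gf z) (fun z => Bq - Eg z) 0 z Hz).
  simpl in H. assert (Bq * 0 - Gf 0 <= Bq * z - Gf z); [|lra].
  apply H.
  - intros y _. auto_derive. apply ex_derive_Gf. rewrite Derive_Gf'. ring.
  - intros y _. pose proof (Eg_ub y). lra.
Qed.

Lemma Vs_0 s : 0 < s -> Vs s 0 <= 2 * Bq.
Proof.
  intros Hs. unfold Vs, Qs. replace (0+1) with 1 by ring. replace (0-1) with (-(1)) by ring.
  replace (-(1)/s) with (-(1/s)) by (field; lra). rewrite Gf_even.
  replace (0/s) with 0 by (field; lra).
  assert (0 <= 1/s) by (apply Rlt_le, Rdiv_lt_0_compat; lra).
  pose proof (Gf_lin (1/s) H).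
  assert (s * Gf (1/s) <= s * (Gf 0 + Bq * (1/s))) by (apply Rmult_le_compat_l; lra).
  replace (s * (Gf 0 + Bq * (1/s))) with (s * Gf 0 + Bq) in H1 by (field; lra). lra.
Qed.

Lemma Vs_max s y : 0 < s -> Vs s y <= 2 * Bq.
Proof.
  intros Hs. destruct (Rle_dec 0 y).
  - pose proof (Vs_decr s 0 y Hs ltac:(lra)). pose proof (Vs_0 s Hs). lra.
  - rewrite <- Vs_even. pose proof (Vs_decr s 0 (-y) Hs ltac:(lra)). pose proof (Vs_0 s Hs). lra.
Qed.

Lemma Vs_1_eq s : 0 < s -> Vs s 1 = 2 * (Eg (2/s) - Eg (1/s)) +
   s/2 * (1 - 2 * exp (-((1/s)*(1/s))) + exp (-((2/s)*(2/s)))).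
Proof.
  intros Hs. unfold Vs, Qs, Gf. replace (1+1) with 2 by ring. replace (1-1) with 0 by ring.
  replace (0/s) with 0 by (field; lra). rewrite Eg_0. replace (-(0*0)) with 0 by ring. rewrite exp_0.
  field. lra.
Qed.

Lemma Eg_seg_upper h : 0 < h -> Eg (2*h) - Eg h <= (exp (-(h*h)) - exp (-((2*h)*(2*h)))) / (2*h).
Proof.
  intros Hh.
  assert (H := incr_of_deriv (fun z => - exp (-(z*z)) / (2*h) - Eg z)
     (fun z => (z/h - 1) * exp (-(z*z))) h (2*h) ltac:(lra)).
  simpl in H.
  assert (- exp (- (h * h)) / (2 * h) - Eg h <= - exp (- (2 * h * (2 * h))) / (2 * h) - Eg (2 * h));
   [| unfold Rdiv in *; lra].
  apply H.
  - intros z _. auto_derive; [side; lra|]. rewrite Derive_Eg'. field. lra.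
  - intros z Hz. apply Rmult_le_pos; [|apply Rlt_le, exp_pos].
    assert (1 <= z/h); [|lra]. apply Rmult_le_reg_r with h; [lra|]. unfold Rdiv. rewrite Rmult_assoc, Rinv_l; lra.
Qed.

Lemma Vs_1_upper s : 0 < s -> Vs s 1 <= 2 * s.
Proof.
  intros Hs. rewrite (Vs_1_eq s Hs).
  set (h := 1/s). assert (Hh : 0 < h) by (unfold h; apply Rdiv_lt_0_compat; lra).
  replace (2/s) with (2*h) by (unfold h; field; lra).
  pose proof (Eg_seg_upper h Hh).
  pose proof (exp_pos (-(h*h))). pose proof (exp_pos (-((2*h)*(2*h)))).
  assert (exp (-(h*h)) <= 1) by (rewrite <- exp_0; apply exp_le_exp; nra).
  assert (exp (-((2*h)*(2*h))) <= 1) by (rewrite <- exp_0; apply exp_le_exp; nra).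
  assert ((exp (-(h*h)) - exp (-((2*h)*(2*h)))) / (2*h) <= s/2).
  { replace ((exp (-(h*h)) - exp (-((2*h)*(2*h)))) / (2*h)) with (s * (exp (-(h*h)) - exp (-((2*h)*(2*h)))) / 2)
      by (unfold h; field; lra). nra. }
  nra.
Qed.

Definition Lam_low (h : R) := 1 + 2 * exp (-(4*(h*h))) - (exp (-(h*h)) - exp (-(4*(h*h)))) / (h*h).

Lemma Vs_1_lower s : 0 < s -> s/2 * Lam_low (1/s) <= Vs s 1.
Proof.
  intros Hs. rewrite (Vs_1_eq s Hs).
  set (h := 1/s). assert (Hh : 0 < h) by (unfold h; apply Rdiv_lt_0_compat; lra).
  replace (2/s) with (2*h) by (unfold h; field; lra).
  set (P := fun z => -(3/(4*h)) * exp (-(z*z)) + (z*z+1) * exp (-(z*z)) / (4*h*h*h)).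
  assert (H := incr_of_deriv (fun z => Eg z - P z)
     (fun z => exp (-(z*z)) * ((z/h - 1)^2 * (z/h + 2) / 2)) h (2*h) ltac:(lra)).
  simpl in H.
  assert (HP : P h - Eg h <= P (2*h) - Eg (2*h) -> False -> True) by tauto.
  assert (Hm : Eg h - P h <= Eg (2*h) - P (2*h)).
  { apply H.
    - intros z _. unfold P. auto_derive; [side; lra|]. rewrite Derive_Eg'. field. lra.
    - intros z Hz. apply Rmult_le_pos; [apply Rlt_le, exp_pos|].
      assert (0 <= z/h) by (apply Rmult_le_pos; [lra|apply Rlt_le, Rinv_0_lt_compat; lra]).
      assert (0 <= (z/h - 1)^2) by (apply pow2_ge_0). nra. }
  unfold P in Hm. unfold Lam_low.
  replace (s/2) with (1/(2*h)) by (unfold h; field; lra).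
  replace (exp (-(4*(h*h)))) with (exp (-((2*h)*(2*h)))) by (f_equal; ring).
  assert (E: 1 / (2 * h) * (1 + 2 * exp (- (2 * h * (2 * h))) - (exp (- (h * h)) - exp (- (2 * h * (2 * h)))) / (h * h))
    = 2 * ((-(3/(4*h)) * exp (-((2*h)*(2*h))) + ((2*h)*(2*h)+1) * exp (-((2*h)*(2*h))) / (4*h*h*h))
          - (-(3/(4*h)) * exp (-(h*h)) + (h*h+1) * exp (-(h*h)) / (4*h*h*h)))
      + 1/(2*h) * (1 - 2 * exp (- (h * h)) + exp (- (2 * h * (2 * h))))).
  { field. lra. }
  rewrite E. lra.
Qed.

Lemma Vs_hat s y : 0 < s -> Vs s y <= 2 * Bq * Rmax (1 - Rabs y) 0 + Vs s 1.
Proof.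
  intros Hs.
  assert (Hpos : forall y, 0 <= y -> Vs s y <= 2 * Bq * Rmax (1 - y) 0 + Vs s 1).
  { intros z Hz. destruct (Rle_dec 1 z).
    - rewrite Rmax_right by lra. pose proof (Vs_decr s 1 z Hs ltac:(lra)). lra.
    - rewrite Rmax_left by lra.
      assert (H := incr_of_deriv (fun y => 2 * Bq * y + Vs s y) (fun y => 2 * Bq + DVs s y) z 1 ltac:(lra)).
      simpl in H.
      assert (2 * Bq * z + Vs s z <= 2 * Bq * 1 + Vs s 1); [|lra].
      apply H.
      + intros x _. apply (is_derive_plus (K:=R_AbsRing) (V:=R_NormedModule) (fun y => 2 * Bq * y) (Vs s)).
        * auto_derive; auto. ring.
        * now apply Vs_deriv.
      + intros x _. pose proof (DVs_bound s x Hs). apply Rabs_le_between in H0. lra. }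
  destruct (Rle_dec 0 y).
  - rewrite Rabs_right by lra. now apply Hpos.
  - rewrite Rabs_left by lra. rewrite <- Vs_even. apply Hpos. lra.
Qed.
Lemma cont_pt_of_eps (h : R -> R) t :
  (forall eps, 0 < eps -> exists d, 0 < d /\ forall s, Rabs (s - t) < d -> Rabs (h s - h t) < eps) ->
  continuity_pt h t.
Proof.
  intros H. unfold continuity_pt, continue_in, limit1_in, limit_in. intros eps Heps.
  destruct (H eps Heps) as [d [Hd Hs]]. exists d; split; auto.
  intros x [_ Hx]. simpl in *. unfold R_dist in *. apply Hs; auto.
Qed.

Lemma eps_of_cont_pt (h : R -> R) t : continuity_pt h t ->
  forall eps, 0 < eps -> exists d, 0 < d /\ forall s, Rabs (s - t) < d -> Rabs (h s - h t) < eps.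
Proof.
  intros H eps Heps. unfold continuity_pt, continue_in, limit1_in, limit_in in H.
  destruct (H eps Heps) as [d [Hd Hs]]. exists d; split; auto.
  intros s Hst. destruct (Req_dec s t) as [->|Hne].
  - unfold Rminus. rewrite Rplus_opp_r, Rabs_R0. lra.
  - apply (Hs s). split. unfold D_x, no_cond. split; auto. simpl. unfold R_dist. auto.
Qed.

Lemma cont2d_slice_t f x t : continuity_2d_pt f x t -> continuity_pt (fun s => f x s) t.
Proof.
  intros H. apply cont_pt_of_eps. intros eps Heps.
  destruct (H (mkposreal eps Heps)) as [d Hd]. exists d. split. apply cond_pos.
  intros s Hs. apply Hd; auto. unfold Rminus. rewrite Rplus_opp_r, Rabs_R0. apply cond_pos.
Qed.

Lemma cont2d_comp_t (g : R -> R -> R) (sg : R -> R) x t :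
  continuity_2d_pt g x (sg t) -> continuity_pt sg t ->
  continuity_2d_pt (fun u v => g u (sg v)) x t.
Proof.
  intros Hg Hs eps. destruct (Hg eps) as [d1 Hd1].
  destruct (eps_of_cont_pt sg t Hs d1 (cond_pos d1)) as [d2 [Hd2 Hs2]].
  assert (Hd : 0 < Rmin d1 d2) by (apply Rmin_pos; [apply cond_pos|lra]).
  exists (mkposreal _ Hd). intros u v Hu Hv. simpl in Hu, Hv.
  apply Hd1. eapply Rlt_le_trans; [apply Hu|apply Rmin_l].
  apply Hs2. eapply Rlt_le_trans; [apply Hv|apply Rmin_r].
Qed.

Definition clamp (a b x : R) := Rmax a (Rmin b x).

Lemma clamp_in a b x : a <= b -> a <= clamp a b x <= b.
Proof. intros H. unfold clamp. split. apply Rmax_l. apply Rmax_lub; auto. apply Rmin_l. Qed.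

Lemma clamp_id a b x : a <= x <= b -> clamp a b x = x.
Proof. intros H. unfold clamp. rewrite Rmin_right by lra. rewrite Rmax_right by lra. auto. Qed.

Lemma clamp_lip a b x y : a <= b -> Rabs (clamp a b x - clamp a b y) <= Rabs (x - y).
Proof.
  intros H. unfold clamp.
  unfold Rmax, Rmin. repeat destruct Rle_dec; apply Rabs_le; 
  repeat match goal with |- context [Rabs ?z] => destruct (Rabs_le_between z z (Rle_refl _)) end;
  split; try (apply Rabs_def2b ||idtac); 
  try (pose proof (Rabs_pos (x - y)); pose proof (Rle_abs (x-y)); pose proof (Rle_abs (-(x-y))); rewrite Rabs_Ropp in *; lra).
Qed.
Lemma min_rect (f : R -> R -> R) a b c d : a <= b -> c <= d ->
  (forall x t, a <= x <= b -> c <= t <= d -> continuity_2d_pt f x t) ->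
  exists x0 t0, a <= x0 <= b /\ c <= t0 <= d /\
    forall x t, a <= x <= b -> c <= t <= d -> f x0 t0 <= f x t.
Proof.
  intros Hab Hcd Hf.
  set (P := fun x t => c <= t <= d /\ forall t', c <= t' <= d -> f (clamp a b x) t <= f (clamp a b x) t').
  assert (HP : forall x, exists t, P x t).
  { intros x. destruct (continuity_ab_min (fun t => f (clamp a b x) t) c d Hcd) as [m [Hm1 Hm2]].
    - intros t Ht. apply cont2d_slice_t. apply Hf; auto. apply clamp_in; auto.
    - exists m. split; auto. }
  set (ts := fun x => proj1_sig (constructive_indefinite_description _ (HP x))).
  assert (Hts : forall x, P x (ts x)) by (intros x; unfold ts; destruct constructive_indefinite_description; auto).
  set (g := fun x => f (clamp a b x) (ts x)).
  assert (Hg : forall x, continuity_pt g x).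
  { intros x. apply cont_pt_of_eps. intros eps Heps.
    destruct (uniform_continuity_2d f a b c d Hf (mkposreal (eps/2) ltac:(lra))) as [del Hdel].
    exists del. split. apply cond_pos. intros s Hs.
    pose proof (clamp_lip a b s x Hab). pose proof (clamp_in a b s Hab). pose proof (clamp_in a b x Hab).
    destruct (Hts s) as [Hs1 Hs2]. destruct (Hts x) as [Hx1 Hx2].
    assert (A1 : Rabs (f (clamp a b s) (ts x) - f (clamp a b x) (ts x)) < eps/2).
    { apply Hdel; auto. lra. unfold Rminus; rewrite Rplus_opp_r, Rabs_R0; apply cond_pos. }
    assert (A2 : Rabs (f (clamp a b x) (ts s) - f (clamp a b s) (ts s)) < eps/2).
    { apply Hdel; auto. rewrite Rabs_minus_sym. lra. unfold Rminus; rewrite Rplus_opp_r, Rabs_R0; apply cond_pos. }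
    specialize (Hs2 (ts x) Hx1). specialize (Hx2 (ts s) Hs1).
    apply Rabs_lt_between in A1. apply Rabs_lt_between in A2.
    unfold g. apply Rabs_lt_between. lra. }
  destruct (continuity_ab_min g a b Hab (fun x _ => Hg x)) as [x0 [Hx0 Hx0b]].
  exists x0, (ts x0). destruct (Hts x0) as [Ht1 Ht2]. rewrite clamp_id in Ht2 by auto.
  split; auto. split; auto.
  intros x t Hx Ht. specialize (Hx0 x Hx). unfold g in Hx0. rewrite !clamp_id in Hx0 by auto.
  destruct (Hts x) as [_ Hx2]. rewrite clamp_id in Hx2 by auto. specialize (Hx2 t Ht). lra.
Qed.

Lemma BUC_cont_ext U : BUC U -> forall x t, continuity_2d_pt (fun x t => U x (Rmax t 0)) x t.
Proof.
  intros [_ HU] x t eps. destruct (HU eps (cond_pos eps)) as [d [Hd H]].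
  exists (mkposreal d Hd). intros u v Hu Hv. simpl in *.
  apply H; try apply Rmax_r. auto.
  eapply Rle_lt_trans; [|apply Hv].
  unfold Rmax; repeat destruct Rle_dec; apply Rabs_le;
  pose proof (Rle_abs (v - t)); pose proof (Rle_abs (-(v-t))); rewrite Rabs_Ropp in *; lra.
Qed.

Lemma halfplane_min (f : R -> R -> R) x1 t1 :
  (forall x t, continuity_2d_pt f x t) -> 0 <= t1 ->
  (exists C al, 0 < al /\ forall x t, 0 <= t -> C + al * (Rabs x + t) <= f x t) ->
  exists x0 t0, 0 <= t0 /\ f x0 t0 <= f x1 t1 /\ forall x t, 0 <= t -> f x0 t0 <= f x t.
Proof.
  intros Hf Ht1 [C [al [Hal Hco]]].
  set (W := Rabs (f x1 t1 - C) / al + Rabs x1 + t1 + 1).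
  assert (HW : forall x t, 0 <= t -> f x t <= f x1 t1 -> Rabs x <= W /\ t <= W).
  { intros x t Ht Hle. specialize (Hco x t Ht).
    assert (al * (Rabs x + t) <= Rabs (f x1 t1 - C)) by (pose proof (Rle_abs (f x1 t1 - C)); lra).
    assert (Rabs x + t <= Rabs (f x1 t1 - C) / al).
    { apply Rmult_le_reg_l with al; auto. replace (al * (Rabs (f x1 t1 - C) / al)) with (Rabs (f x1 t1 - C)) by (field; lra). lra. }
    pose proof (Rabs_pos x). pose proof (Rabs_pos x1). unfold W. lra. }
  assert (HW0 : 0 <= W).
  { unfold W. pose proof (Rabs_pos x1). pose proof (Rabs_pos (f x1 t1 - C)).
    assert (0 <= Rabs (f x1 t1 - C) / al) by (apply Rmult_le_pos; auto; apply Rlt_le, Rinv_0_lt_compat; auto). lra. }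
  destruct (min_rect f (-W) W 0 W ltac:(lra) HW0 (fun x t _ _ => Hf x t)) as [x0 [t0 [Hx0 [Ht0 Hmin]]]].
  assert (Hin : -W <= x1 <= W /\ 0 <= t1 <= W).
  { destruct (HW x1 t1 Ht1 (Rle_refl _)). split; [apply Rabs_le_between|]; lra. }
  assert (Hle : f x0 t0 <= f x1 t1) by (apply Hmin; tauto).
  exists x0, t0. split; [lra|]. split; auto.
  intros x t Ht. destruct (Rle_dec (f x t) (f x1 t1)).
  - destruct (HW x t Ht r). apply Hmin; [apply Rabs_le_between|]; lra.
  - lra.
Qed.
Lemma compare_parab eps F g U Phi :
  visc_sol_parabolic eps F g U -> BUC U -> C21_test Phi ->
  (forall x, Phi x 0 <= g x) ->
  (exists C al, 0 < al /\ forall x t, 0 <= t -> Phi x t <= C - al * (Rabs x + t)) ->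
  (forall x t, 0 < t -> dt Phi x t + F (dx Phi x t) - eps * dxx Phi x t < 0) ->
  forall x t, 0 <= t -> Phi x t <= U x t.
Proof.
  intros [[Hc [H0 _]] [_ Hsup]] Hbuc HPhi Hg [C [al [Hal Hco]]] Hpde x1 t1 Ht1.
  destruct (Rle_dec (Phi x1 t1) (U x1 t1)) as [|Hn]; auto. exfalso.
  set (f := fun x t => U x (Rmax t 0) - Phi x t).
  destruct Hbuc as [[M HM] Huc].
  assert (Hf : forall x t, continuity_2d_pt f x t).
  { intros x t. unfold f. apply continuity_2d_pt_minus.
    apply BUC_cont_ext. split; [exists M; auto|auto].
    destruct HPhi as [HP1 _]. destruct (HP1 x t) as [_ [_ [Hc2 _]]]. auto. }
  destruct (halfplane_min f x1 t1 Hf Ht1) as [x0 [t0 [Ht0 [Hle Hmin]]]].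
  { exists (-M - C), al. split; auto. intros x t Ht. unfold f. rewrite Rmax_left by lra.
    specialize (HM x t Ht). apply Rabs_le_between in HM. specialize (Hco x t Ht). lra. }
  assert (Hf1 : f x1 t1 < 0) by (unfold f; rewrite Rmax_left by lra; lra).
  assert (Ht0p : 0 < t0).
  { destruct Ht0 as [|E]; auto. subst t0.
    assert (0 <= f x0 0) by (unfold f; rewrite Rmax_right by lra; rewrite H0; specialize (Hg x0); lra).
    lra. }
  assert (Hlm : loc_min U Phi x0 t0).
  { exists 1. split; [lra|]. intros x t Ht _ _. specialize (Hmin x t (Rlt_le _ _ Ht)).
    unfold f in Hmin. rewrite !Rmax_left in Hmin by lra. lra. }
  specialize (Hsup Phi x0 t0 HPhi Ht0p Hlm). specialize (Hpde x0 t0 Ht0p). lra.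
Qed.

Lemma compare_HJ F g U Phi :
  visc_sol_HJ F g U -> BUC U -> C1_test Phi ->
  (forall x, g x <= Phi x 0) ->
  (exists C al, 0 < al /\ forall x t, 0 <= t -> C + al * (Rabs x + t) <= Phi x t) ->
  (forall x t, 0 < t -> dt Phi x t + F (dx Phi x t) > 0) ->
  forall x t, 0 <= t -> U x t <= Phi x t.
Proof.
  intros [[Hc [H0 _]] [Hsub _]] Hbuc HPhi Hg [C [al [Hal Hco]]] Hpde x1 t1 Ht1.
  destruct (Rle_dec (U x1 t1) (Phi x1 t1)) as [|Hn]; auto. exfalso.
  set (f := fun x t => Phi x t - U x (Rmax t 0)).
  destruct Hbuc as [[M HM] Huc].
  assert (Hf : forall x t, continuity_2d_pt f x t).
  { intros x t. unfold f. apply continuity_2d_pt_minus.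
    destruct (HPhi x t) as [_ [_ [Hc2 _]]]. auto.
    apply BUC_cont_ext. split; [exists M; auto|auto]. }
  destruct (halfplane_min f x1 t1 Hf Ht1) as [x0 [t0 [Ht0 [Hle Hmin]]]].
  { exists (C - M), al. split; auto. intros x t Ht. unfold f. rewrite Rmax_left by lra.
    specialize (HM x t Ht). apply Rabs_le_between in HM. specialize (Hco x t Ht). lra. }
  assert (Hf1 : f x1 t1 < 0) by (unfold f; rewrite Rmax_left by lra; lra).
  assert (Ht0p : 0 < t0).
  { destruct Ht0 as [|E]; auto. subst t0.
    assert (0 <= f x0 0) by (unfold f; rewrite Rmax_right by lra; rewrite H0; specialize (Hg x0); lra).
    lra. }
  assert (Hlm : loc_max U Phi x0 t0).
  { exists 1. split; [lra|]. intros x t Ht _ _. specialize (Hmin x t (Rlt_le _ _ Ht)).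
    unfold f in Hmin. rewrite !Rmax_left in Hmin by lra. lra. }
  specialize (Hsub Phi x0 t0 HPhi Ht0p Hlm). specialize (Hpde x0 t0 Ht0p). lra.
Qed.
Ltac c2d_step :=
  first [ apply continuity_2d_pt_const
        | apply continuity_2d_pt_id1
        | apply continuity_2d_pt_id2
        | apply continuity_2d_pt_plus
        | apply continuity_2d_pt_mult
        | apply continuity_2d_pt_opp
        | apply continuity_2d_pt_inv
        | apply (continuity_1d_2d_pt_comp exp); [apply derivable_continuous_pt, derivable_pt_exp|]
        | apply (continuity_1d_2d_pt_comp Eg); [apply Eg_cont|]
        | apply (continuity_1d_2d_pt_comp sqrt); [apply continuity_pt_sqrt|] ].
Ltac c2d := unfold Rdiv, Rminus; repeat c2d_step.

Definition psi (de z : R) := (z + 1 + sqrt ((z+1)*(z+1) + de*de)) / 2.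
Definition dpsi (de z : R) := (1 + (z+1) / sqrt ((z+1)*(z+1) + de*de)) / 2.
Definition rho (x : R) := sqrt (1 + x*x).
Definition drho (x : R) := x / sqrt (1 + x*x).
Definition wHJ (de eta ga K : R) (x t : R) := psi de (x - t) + eta * t + ga * (K * t + rho x).

Lemma sq_pos a b : 0 < b -> 0 < a*a + b*b.
Proof. intros. nra. Qed.

Lemma psi_deriv de z : 0 < de -> is_derive (psi de) z (dpsi de z).
Proof.
  intros Hd. unfold psi, dpsi. pose proof (sq_pos (z+1) de Hd).
  pose proof (sqrt_lt_R0 _ H). auto_derive. repeat split; auto. field. lra.
Qed.

Lemma wHJ_dt de eta ga K x t : 0 < de ->
  dt (wHJ de eta ga K) x t = - dpsi de (x - t) + eta + ga * K.
Proof.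
  intros Hd. unfold dt. apply is_derive_unique. unfold wHJ, psi, dpsi, rho.
  pose proof (sq_pos (x - t + 1) de Hd). pose proof (sqrt_lt_R0 _ H).
  pose proof (sqrt_lt_R0 (1 + x*x) ltac:(nra)).
  auto_derive. repeat split; auto; nra. unfold Rminus in *. field. lra.
Qed.

Lemma wHJ_dx de eta ga K x t : 0 < de ->
  dx (wHJ de eta ga K) x t = dpsi de (x - t) + ga * drho x.
Proof.
  intros Hd. unfold dx. apply is_derive_unique. unfold wHJ, psi, dpsi, rho, drho.
  pose proof (sq_pos (x - t + 1) de Hd). pose proof (sqrt_lt_R0 _ H).
  pose proof (sqrt_lt_R0 (1 + x*x) ltac:(nra)).
  auto_derive. repeat split; auto; nra. unfold Rminus in *. field. lra.
Qed.

Lemma wHJ_C1 de eta ga K : 0 < de -> C1_test (wHJ de eta ga K).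
Proof.
  intros Hd x t.
  assert (Hs1 : forall z, 0 < (z + 1) * (z + 1) + de * de) by (intros; apply sq_pos; auto).
  assert (Hs2 : forall z, 0 < 1 + z * z) by (intros z; pose proof (Rle_0_sqr z); unfold Rsqr in *; lra).
  assert (Hq1 : forall z, sqrt ((z + 1) * (z + 1) + de * de) <> 0) by (intros; apply Rgt_not_eq, sqrt_lt_R0, Hs1).
  assert (Hq2 : forall z, sqrt (1 + z * z) <> 0) by (intros; apply Rgt_not_eq, sqrt_lt_R0, Hs2).
  assert (Hr1 : forall z, 0 <= (z + 1) * (z + 1) + de * de) by (intros; apply Rlt_le, Hs1).
  assert (Hr2 : forall z, 0 <= 1 + z * z) by (intros; apply Rlt_le, Hs2).
  split; [|split; [|split; [|split]]].
  - unfold wHJ, psi, rho. auto_derive; repeat split; try apply Hs1; try apply Hs2; auto.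
  - unfold wHJ, psi, rho. auto_derive; repeat split; try apply Hs1; try apply Hs2; auto.
  - unfold wHJ, psi, rho. c2d; first [apply Hr1 | apply Hr2 | apply Hq1 | apply Hq2 | lra].
  - apply (continuity_2d_pt_ext (fun x t => - dpsi de (x - t) + eta + ga * K)).
    + intros; rewrite wHJ_dt; auto.
    + unfold dpsi. c2d; first [apply Hr1 | apply Hr2 | apply Hq1 | apply Hq2 | lra].
  - apply (continuity_2d_pt_ext (fun x t => dpsi de (x - t) + ga * drho x)).
    + intros; rewrite wHJ_dx; auto.
    + unfold dpsi, drho. c2d; first [apply Hr1 | apply Hr2 | apply Hq1 | apply Hq2 | lra].
Qed.
Lemma ln_lower p : 0 < p -> 1 - 1/p <= ln p.
Proof.
  intros Hp. pose proof (exp_ineq1_le (ln (1/p))). rewrite exp_ln in H by (apply Rdiv_lt_0_compat; lra).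
  unfold Rdiv in *. rewrite Rmult_1_l in *. rewrite ln_Rinv in H by lra. lra.
Qed.

Lemma Rpower_split p m : 0 < p -> Rpower p m = p * Rpower p (m - 1).
Proof.
  intros Hp. replace m with (1 + (m - 1)) at 1 by ring. rewrite Rpower_plus, Rpower_1; auto.
Qed.

Lemma bernoulli p m : 0 < p -> 1 < m -> p - (1 - 1/m) <= Rpower p m / m.
Proof.
  intros Hp Hm. rewrite Rpower_split by auto.
  assert (H1 : 1 + (m-1) * ln p <= Rpower p (m-1)) by (unfold Rpower; apply exp_ineq1_le).
  pose proof (ln_lower p Hp).
  assert ((m-1) * (1 - 1/p) <= (m-1) * ln p) by (apply Rmult_le_compat_l; lra).
  assert (p * (1 + (m-1)*(1 - 1/p)) <= p * Rpower p (m-1)) by (apply Rmult_le_compat_l; lra).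
  replace (p * (1 + (m-1)*(1 - 1/p))) with (1 + m * (p - 1)) in H2 by (field; lra).
  apply Rmult_le_reg_r with m; [lra|].
  replace ((p - (1 - 1/m)) * m) with (1 + m * (p - 1)) by (field; lra).
  replace (p * Rpower p (m - 1) / m * m) with (p * Rpower p (m-1)) by (field; lra). lra.
Qed.

Lemma Fpow_le p m : 0 < p <= 1 -> 1 < m -> Rpower p m / m <= p.
Proof.
  intros Hp Hm. rewrite Rpower_split by lra.
  assert (Hl : ln p <= 0).
  { destruct (Req_dec p 1) as [E|E]. subst; rewrite ln_1; lra.
    rewrite <- ln_1. left. apply ln_increasing; lra. }
  assert (Rpower p (m-1) <= 1).
  { unfold Rpower. rewrite <- exp_0 at 2. apply exp_le_exp.
    assert (0 <= (m-1) * (- ln p)) by (apply Rmult_le_pos; lra). nra. }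
  assert (0 < Rpower p (m-1)) by (unfold Rpower; apply exp_pos).
  apply Rmult_le_reg_r with m; [lra|].
  replace (p * Rpower p (m - 1) / m * m) with (p * Rpower p (m-1)) by (field; lra).
  assert (p * Rpower p (m-1) <= p * 1) by (apply Rmult_le_compat_l; lra). nra.
Qed.

Lemma abs_lt_sqrt a d : 0 < d -> Rabs a < sqrt (a*a + d*d).
Proof.
  intros Hd. rewrite <- sqrt_Rsqr_abs. apply sqrt_lt_1. apply Rle_0_sqr. nra. unfold Rsqr. nra.
Qed.

Lemma ratio_lt1 a d : 0 < d -> -1 < a / sqrt (a*a + d*d) < 1.
Proof.
  intros Hd. pose proof (abs_lt_sqrt a d Hd). apply Rabs_lt_between in H.
  set (S := sqrt (a*a+d*d)) in *. assert (0 < S) by lra.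
  split.
  - apply Rmult_lt_reg_r with S; auto. replace (a / S * S) with a by (field; lra). lra.
  - apply Rmult_lt_reg_r with S; auto. replace (a / S * S) with a by (field; lra). lra.
Qed.

Lemma dpsi_range de z : 0 < de -> 0 < dpsi de z < 1.
Proof. intros Hd. unfold dpsi. pose proof (ratio_lt1 (z+1) de Hd). lra. Qed.

Lemma drho_range x : -1 < drho x < 1.
Proof.
  unfold drho. replace (1 + x*x) with (x*x + 1*1) by ring. apply ratio_lt1. lra.
Qed.

Lemma rho_ge x : Rabs x <= rho x.
Proof.
  unfold rho. rewrite <- sqrt_Rsqr_abs. apply sqrt_le_1. apply Rle_0_sqr. nra. unfold Rsqr. nra.
Qed.

Lemma psi_ge de z : 0 < de -> Rmax (z + 1) 0 <= psi de z.
Proof.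
  intros Hd. unfold psi. pose proof (abs_lt_sqrt (z+1) de Hd).
  pose proof (Rle_abs (z+1)). pose proof (Rle_abs (-(z+1))). rewrite Rabs_Ropp in *.
  unfold Rmax. destruct Rle_dec; lra.
Qed.

Lemma psi_m1 de : 0 < de -> psi de (-1) = de / 2.
Proof.
  intros Hd. unfold psi. replace (-1 + 1) with 0 by ring. replace (0*0 + de*de) with (de*de) by ring.
  rewrite sqrt_square by lra. lra.
Qed.

Lemma hat_le_psi de x : 0 < de -> hat x <= psi de x.
Proof.
  intros Hd. pose proof (psi_ge de x Hd). unfold hat. 
  unfold Rmax in *. destruct (Rle_dec (1 - Rabs x) 0); destruct (Rle_dec (x+1) 0);
  pose proof (Rle_abs x); pose proof (Rle_abs (-x)); rewrite Rabs_Ropp in *; lra.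
Qed.

Theorem HJ_bound (m : R) (F : R -> R) (u : R -> R -> R) :
  1 < m -> loc_lipschitz F ->
  (forall p, 0 < p <= 1 -> F p = Rpower p m / m) ->
  BUC u -> visc_sol_HJ F hat u -> u 0 1 <= 1 - 1/m.
Proof.
  intros Hm Hlip HF Hbuc Hvisc.
  set (eta := 1 - 1/m).
  assert (Heta : 0 < eta) by (unfold eta; assert (1/m < 1) by (apply Rmult_lt_reg_r with m; [lra|]; field_simplify; lra); lra).
  destruct (Rle_dec (u 0 1) eta) as [|Hn]; auto. exfalso.
  set (gap := u 0 1 - eta). assert (Hgap : 0 < gap) by (unfold gap; lra).
  destruct (Hlip 2 ltac:(lra)) as [L HL].
  set (K := Rabs L + 1).
  assert (HK : 1 <= K) by (unfold K; pose proof (Rabs_pos L); lra).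
  set (de := gap / 2). assert (Hde : 0 < de) by (unfold de; lra).
  set (ga := Rmin (1/2) (gap / (4 * (K + 1)))).
  assert (Hga : 0 < ga) by (unfold ga; apply Rmin_pos; [lra| apply Rdiv_lt_0_compat; lra]).
  assert (Hga1 : ga <= 1/2) by apply Rmin_l.
  assert (Hga2 : ga * (K + 1) <= gap / 4).
  { assert (ga <= gap / (4 * (K + 1))) by apply Rmin_r.
    apply Rmult_le_compat_r with (r := K + 1) in H; [|lra].
    replace (gap / (4 * (K + 1)) * (K + 1)) with (gap / 4) in H by (field; lra). lra. }
  assert (Hcmp := compare_HJ F hat u (wHJ de eta ga K) Hvisc Hbuc (wHJ_C1 de eta ga K Hde)).
  assert (H01 : u 0 1 <= wHJ de eta ga K 0 1).
  { apply Hcmp; try lra.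
    - intros x. unfold wHJ. replace (x - 0) with x by ring. pose proof (hat_le_psi de x Hde).
      pose proof (rho_ge x). pose proof (Rabs_pos x).
      assert (0 <= ga * (K * 0 + rho x)) by (apply Rmult_le_pos; lra). lra.
    - exists 0, ga. split; auto. intros x t Ht. unfold wHJ.
      pose proof (psi_ge de (x - t) Hde). assert (0 <= Rmax (x - t + 1) 0) by apply Rmax_r.
      pose proof (rho_ge x).
      assert (0 <= eta * t) by (apply Rmult_le_pos; lra).
      assert (ga * (Rabs x + t) <= ga * (K * t + rho x)) by (apply Rmult_le_compat_l; nra).
      lra.
    - intros x t Ht. rewrite wHJ_dt, wHJ_dx by auto.
      pose proof (dpsi_range de (x - t) Hde). pose proof (drho_range x).
      set (p := dpsi de (x - t)) in *. set (q := p + ga * drho x).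
      assert (Hq : Rabs (q - p) <= ga).
      { unfold q. replace (p + ga * drho x - p) with (ga * drho x) by ring.
        rewrite Rabs_mult, (Rabs_right ga) by lra.
        assert (Rabs (drho x) <= 1) by (apply Rabs_le; lra). nra. }
      assert (HLq : Rabs (F q - F p) <= L * Rabs (q - p)).
      { apply HL. apply Rabs_le. apply Rabs_le_between in Hq. lra. apply Rabs_le. lra. }
      assert (L * Rabs (q - p) <= Rabs L * ga).
      { pose proof (Rle_abs L). pose proof (Rabs_pos (q - p)). pose proof (Rabs_pos L). nra. }
      apply Rabs_le_between in HLq.
      assert (Hb := bernoulli p m ltac:(lra) Hm). rewrite <- HF in Hb by lra. fold eta in Hb.
      unfold K. assert (0 <= Rabs L) by apply Rabs_pos. nra. }
  unfold wHJ in H01. replace (0 - 1) with (-1) in H01 by ring. rewrite psi_m1 in H01 by auto.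
  assert (rho 0 = 1) by (unfold rho; replace (1 + 0*0) with 1 by ring; apply sqrt_1).
  rewrite H in H01. unfold de in H01. unfold gap in *. lra.
Qed.
Definition sig (c t : R) := t + (Rmin t 0 * Rmin t 0) / (2 * c).
Definition dsig (c t : R) := 1 + Rmin t 0 / c.

Lemma min_sq_rem t h :
  Rabs (Rmin (t+h) 0 * Rmin (t+h) 0 - Rmin t 0 * Rmin t 0 - 2 * Rmin t 0 * h) <= h * h.
Proof.
  unfold Rmin. destruct (Rle_dec (t+h) 0); destruct (Rle_dec t 0); apply Rabs_le; split; nra.
Qed.

Lemma sig_deriv c t : 0 < c -> is_derive (sig c) t (dsig c t).
Proof.
  intros Hc. apply is_derive_Reals. intros eps Heps.
  assert (Hd : 0 < eps * c) by nra.
  exists (mkposreal _ Hd). intros h Hh0 Hh. simpl in Hh.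
  unfold sig, dsig.
  pose proof (min_sq_rem t h).
  set (A := Rmin (t + h) 0 * Rmin (t + h) 0) in *. set (B := Rmin t 0 * Rmin t 0) in *.
  replace ((t + h + A / (2 * c) - (t + B / (2 * c))) / h - (1 + Rmin t 0 / c))
    with ((A - B - 2 * Rmin t 0 * h) / (2 * c * h)) by (field; lra).
  rewrite Rabs_div by (apply Rmult_integral_contrapositive; split; lra).
  rewrite Rabs_mult, (Rabs_right (2*c)) by lra.
  assert (0 < Rabs h) by (apply Rabs_pos_lt; auto).
  apply Rmult_lt_reg_r with (2 * c * Rabs h); [nra|].
  replace (Rabs (A - B - 2 * Rmin t 0 * h) / (2 * c * Rabs h) * (2 * c * Rabs h))
    with (Rabs (A - B - 2 * Rmin t 0 * h)) by (field; lra).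
  assert (h * h = Rabs h * Rabs h) by (rewrite <- Rabs_mult; rewrite Rabs_right; nra).
  nra.
Qed.

Lemma Rmin_cont t : continuity_pt (fun t => Rmin t 0) t.
Proof.
  apply continuity_pt_ext with (f := fun t => (t - Rabs t) / 2).
  - intros x. unfold Rmin. destruct (Rle_dec x 0).
    rewrite Rabs_left1 by lra. field. rewrite Rabs_right by lra. field.
  - reg.
Qed.

Lemma dsig_cont c t : continuity_pt (dsig c) t.
Proof. unfold dsig. apply continuity_pt_plus. apply continuity_pt_const. intros x y; auto.
  apply continuity_pt_mult. apply Rmin_cont. apply continuity_pt_const. intros x y; auto. Qed.

Lemma sig_cont c t : 0 < c -> continuity_pt (sig c) t.
Proof.
  intros Hc. apply continuity_pt_filterlim. apply (ex_derive_continuous (K:=R_AbsRing) (V:=R_NormedModule)).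
  eexists. apply sig_deriv; auto.
Qed.

Lemma sig_lb c t : 0 < c -> - c / 2 <= sig c t.
Proof.
  intros Hc. unfold sig. unfold Rmin. destruct (Rle_dec t 0).
  - apply Rmult_le_reg_r with (2*c); [lra|].
    replace ((t + t * t / (2 * c)) * (2 * c)) with (2*c*t + t*t) by (field; lra).
    replace (- c / 2 * (2 * c)) with (-(c*c)) by (field; lra). pose proof (Rle_0_sqr (t + c)). unfold Rsqr in *. nra.
  - replace (0*0/(2*c)) with 0 by (field; lra).
    assert (0 < c/2) by lra. lra.
Qed.

Lemma sig_pos c t : 0 < c -> 0 <= t -> sig c t = t /\ dsig c t = 1.
Proof.
  intros Hc Ht. unfold sig, dsig. rewrite Rmin_right by lra. split; field; lra.
Qed.

Definition C21_at (phi : R -> R -> R) x t :=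
  ex_derive (fun s => phi x s) t /\ ex_derive (fun y => phi y t) x /\
  continuity_2d_pt phi x t /\ continuity_2d_pt (dt phi) x t /\
  continuity_2d_pt (dx phi) x t /\
  ex_derive (fun y => dx phi y t) x /\ continuity_2d_pt (dxx phi) x t.

Lemma dt_glue phi c x t : 0 < c -> ex_derive (fun s => phi x s) (sig c t) ->
  dt (fun x t => phi x (sig c t)) x t = dt phi x (sig c t) * dsig c t.
Proof.
  intros Hc Hd. unfold dt. 
  rewrite (Derive_comp (fun s => phi x s) (sig c) t Hd) by (eexists; apply sig_deriv; auto).
  rewrite (is_derive_unique _ _ _ (sig_deriv c t Hc)). ring.
Qed.

Lemma glue phi c : 0 < c -> (forall x t, - c < t -> C21_at phi x t) ->
  C21_test (fun x t => phi x (sig c t)).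
Proof.
  intros Hc H.
  assert (Hs : forall t, - c < sig c t) by (intros t; pose proof (sig_lb c t Hc); lra).
  split.
  - intros x t. destruct (H x (sig c t) (Hs t)) as [H1 [H2 [H3 [H4 [H5 [H6 H7]]]]]].
    split; [|split; [|split; [|split]]].
    + apply (ex_derive_comp (fun s => phi x s) (sig c) t H1). eexists; apply sig_deriv; auto.
    + exact H2.
    + apply (cont2d_comp_t phi (sig c)); auto. apply sig_cont; auto.
    + apply (continuity_2d_pt_ext (fun x t => dt phi x (sig c t) * dsig c t)).
      * intros u v. rewrite dt_glue; auto. apply (H u (sig c v) (Hs v)).
      * apply continuity_2d_pt_mult.
        -- apply (cont2d_comp_t (dt phi) (sig c)); auto. apply sig_cont; auto.
        -- apply (continuity_1d_2d_pt_comp (dsig c) (fun u v => v)). apply dsig_cont. apply continuity_2d_pt_id2.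
    + apply (cont2d_comp_t (dx phi) (sig c)); auto. apply sig_cont; auto.
  - intros x t. destruct (H x (sig c t) (Hs t)) as [H1 [H2 [H3 [H4 [H5 [H6 H7]]]]]].
    split.
    + exact H6.
    + apply (cont2d_comp_t (dxx phi) (sig c)); auto. apply sig_cont; auto.
Qed.
Definition Sq eps tau0 t := 2 * sqrt (eps * (t + tau0)).
Definition d2rho x := (sqrt (1 + x*x) - x * (x / sqrt (1 + x*x))) / (sqrt (1 + x*x) * sqrt (1 + x*x)).
Definition phiP eps tau0 lam Dc ga K x t :=
  lam * Vs (Sq eps tau0 t) (x - t) - Dc - ga * (K * t + rho x).

Lemma one_plus_sq x : 0 < 1 + x * x.
Proof. pose proof (Rle_0_sqr x). unfold Rsqr in *. lra. Qed.

Ltac side2 := repeat (match goal with |- _ /\ _ => split end);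
  try apply ex_derive_Eg; try apply ex_derive_Gf; try apply one_plus_sq; auto.

Lemma phiP_dt eps tau0 lam Dc ga K x t : 0 < eps -> 0 < t + tau0 ->
  dt (phiP eps tau0 lam Dc ga K) x t =
  lam * (eps * D2Vs (Sq eps tau0 t) (x - t) - DVs (Sq eps tau0 t) (x - t)) - ga * K.
Proof.
  intros He Ht. unfold dt. apply is_derive_unique.
  assert (Hp : 0 < eps * (t + tau0)) by nra.
  pose proof (sqrt_lt_R0 _ Hp).
  pose proof (sqrt_lt_R0 (1 + x*x) (one_plus_sq x)).
  unfold phiP, Vs, Qs, Sq, D2Vs, DVs, rho.
  auto_derive.
  - side2; lra.
  - rewrite !Derive_Gf'. unfold Gf. unfold Rdiv, Rminus. field. lra.
Qed.

Lemma phiP_dx eps tau0 lam Dc ga K x t : 0 < eps -> 0 < t + tau0 ->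
  dx (phiP eps tau0 lam Dc ga K) x t = lam * DVs (Sq eps tau0 t) (x - t) - ga * drho x.
Proof.
  intros He Ht. unfold dx. apply is_derive_unique.
  assert (Hp : 0 < eps * (t + tau0)) by nra.
  pose proof (sqrt_lt_R0 _ Hp).
  pose proof (sqrt_lt_R0 (1 + x*x) (one_plus_sq x)).
  unfold phiP, Vs, Qs, Sq, DVs, rho, drho.
  auto_derive.
  - side2; lra.
  - rewrite !Derive_Gf'. unfold Rdiv, Rminus. field. lra.
Qed.

Lemma phiP_dx_deriv eps tau0 lam ga x t : 0 < eps -> 0 < t + tau0 ->
  is_derive (fun y => lam * DVs (Sq eps tau0 t) (y - t) - ga * drho y) x
    (lam * D2Vs (Sq eps tau0 t) (x - t) - ga * d2rho x).
Proof.
  intros He Ht.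
  assert (Hp : 0 < eps * (t + tau0)) by nra.
  pose proof (sqrt_lt_R0 _ Hp).
  pose proof (sqrt_lt_R0 (1 + x*x) (one_plus_sq x)).
  assert (Hs : sqrt (1 + x*x) * sqrt (1 + x*x) = 1 + x*x) by (apply sqrt_sqrt; pose proof (one_plus_sq x); lra).
  unfold Sq, DVs, D2Vs, drho, d2rho.
  auto_derive.
  - side2; lra.
  - rewrite !Derive_Eg'. unfold Rdiv, Rminus. field. lra.
Qed.

Lemma d2rho_le1 x : d2rho x <= 1.
Proof.
  unfold d2rho. pose proof (one_plus_sq x). set (q := sqrt (1 + x*x)).
  assert (Hq : q * q = 1 + x*x) by (apply sqrt_sqrt; lra).
  assert (Hq1 : 1 <= q).
  { assert (sqrt 1 <= q) by (unfold q; apply sqrt_le_1; pose proof (Rle_0_sqr x); unfold Rsqr in *; lra).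
    rewrite sqrt_1 in H0. auto. }
  assert (E : (q - x * (x / q)) / (q * q) = (q*q - x*x) / (q*q*q)) by (field; lra).
  rewrite E. replace (q*q - x*x) with 1 by lra.
  assert (1 <= q*q*q) by nra.
  apply Rmult_le_reg_r with (q*q*q). lra. replace (1 / (q * q * q) * (q * q * q)) with 1 by (field; lra). lra.
Qed.

Lemma Gf_cont z : continuity_pt Gf z.
Proof. apply continuity_pt_filterlim. apply (ex_derive_continuous (K:=R_AbsRing) (V:=R_NormedModule)). apply ex_derive_Gf. Qed.

Ltac c2d_step2 :=
  first [ c2d_step | apply (continuity_1d_2d_pt_comp Gf); [apply Gf_cont|] ].
Ltac c2d2 := unfold Rdiv, Rminus; repeat c2d_step2.

Lemma phiP_dxx eps tau0 lam Dc ga K x t : 0 < eps -> 0 < t + tau0 ->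
  dxx (phiP eps tau0 lam Dc ga K) x t = lam * D2Vs (Sq eps tau0 t) (x - t) - ga * d2rho x.
Proof.
  intros He Ht. unfold dxx.
  rewrite (Derive_ext (fun y => dx (phiP eps tau0 lam Dc ga K) y t)
     (fun y => lam * DVs (Sq eps tau0 t) (y - t) - ga * drho y)).
  - apply is_derive_unique. apply phiP_dx_deriv; auto.
  - intros y. apply phiP_dx; auto.
Qed.

Lemma loc_pos_t tau0 x t : 0 < t + tau0 -> locally_2d (fun u v => 0 < v + tau0) x t.
Proof.
  intros Ht. exists (mkposreal _ Ht). intros u v _ Hv. simpl in Hv.
  apply Rabs_lt_between in Hv. lra.
Qed.

Lemma phiP_C21_at eps tau0 lam Dc ga K x t : 0 < eps -> 0 < t + tau0 ->
  C21_at (phiP eps tau0 lam Dc ga K) x t.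
Proof.
  intros He Ht.
  assert (Hp : 0 < eps * (t + tau0)) by nra.
  pose proof (sqrt_lt_R0 _ Hp).
  pose proof (one_plus_sq x).
  pose proof (sqrt_lt_R0 (1 + x*x) (one_plus_sq x)).
  split; [|split; [|split; [|split; [|split; [|split]]]]].
  - unfold phiP, Vs, Qs, Sq, rho. auto_derive. side2; lra.
  - unfold phiP, Vs, Qs, Sq, rho. auto_derive. side2; lra.
  - unfold phiP, Vs, Qs, Sq, rho. c2d2; try apply Rgt_not_eq; try lra; nra.
  - apply (continuity_2d_pt_ext_loc
      (fun x t => lam * (eps * D2Vs (Sq eps tau0 t) (x - t) - DVs (Sq eps tau0 t) (x - t)) - ga * K)).
    + generalize (loc_pos_t tau0 x t Ht). apply locally_2d_impl. apply locally_2d_forall.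
      intros u v Hv. rewrite phiP_dt; auto.
    + unfold D2Vs, DVs, Sq. c2d2; try apply Rgt_not_eq; try lra; nra.
  - apply (continuity_2d_pt_ext_loc (fun x t => lam * DVs (Sq eps tau0 t) (x - t) - ga * drho x)).
    + generalize (loc_pos_t tau0 x t Ht). apply locally_2d_impl. apply locally_2d_forall.
      intros u v Hv. rewrite phiP_dx; auto.
    + unfold DVs, Sq, drho. c2d2; try apply Rgt_not_eq; try lra; nra.
  - eapply ex_derive_ext. intros y. symmetry. apply phiP_dx; auto.
    eexists. apply phiP_dx_deriv; auto.
  - apply (continuity_2d_pt_ext_loc (fun x t => lam * D2Vs (Sq eps tau0 t) (x - t) - ga * d2rho x)).
    + generalize (loc_pos_t tau0 x t Ht). apply locally_2d_impl. apply locally_2d_forall.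
      intros u v Hv. rewrite phiP_dxx; auto.
    + unfold D2Vs, Sq, d2rho. c2d2; try apply Rgt_not_eq; try lra; nra.
Qed.
Definition tau0 : R := 1 / 1000000.
Definition lamc : R := 1 / (2 * Bq).

Lemma Bq_pos : 0 < Bq.
Proof. unfold Bq. lra. Qed.

Lemma Sq_pos eps t : 0 < eps -> 0 < t + tau0 -> 0 < Sq eps tau0 t.
Proof. intros. unfold Sq. assert (0 < sqrt (eps * (t + tau0))) by (apply sqrt_lt_R0; nra). lra. Qed.

Theorem parab_bound (eps m : R) (F : R -> R) (ueps : R -> R -> R) :
  0 < eps -> eps < 1/4 -> 1 < m -> loc_lipschitz F ->
  (forall p, 0 < p <= 1 -> F p = Rpower p m / m) ->
  (forall p, -1 <= p <= 0 -> F p <= p) ->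
  BUC ueps -> visc_sol_parabolic eps F hat ueps ->
  lamc * Vs (Sq eps tau0 1) 1 - lamc * Vs (Sq eps tau0 0) 1 <= ueps 0 1.
Proof.
  intros He He4 Hm Hlip HF Hneg Hbuc Hvisc.
  set (Dc := lamc * Vs (Sq eps tau0 0) 1).
  assert (Htau : 0 < tau0) by (unfold tau0; lra).
  assert (Hlam : lamc * (2 * Bq) = 1) by (unfold lamc; field; unfold Bq; lra).
  assert (Hlam0 : 0 < lamc) by (unfold lamc; pose proof Bq_pos; apply Rdiv_lt_0_compat; lra).
  destruct (Rle_dec (lamc * Vs (Sq eps tau0 1) 1 - Dc) (ueps 0 1)) as [|Hn]; auto. exfalso.
  set (gap := lamc * Vs (Sq eps tau0 1) 1 - Dc - ueps 0 1). assert (Hgap : 0 < gap) by (unfold gap; lra).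
  destruct (Hlip 2 ltac:(lra)) as [L HL].
  set (K := Rabs L + 1).
  assert (HK : 1 <= K) by (unfold K; pose proof (Rabs_pos L); lra).
  set (ga := Rmin (1/2) (gap / (2 * (K + 1)))).
  assert (Hga : 0 < ga) by (unfold ga; apply Rmin_pos; [lra| apply Rdiv_lt_0_compat; lra]).
  assert (Hga1 : ga <= 1/2) by apply Rmin_l.
  assert (Hga2 : ga * (K + 1) <= gap / 2).
  { assert (ga <= gap / (2 * (K + 1))) by apply Rmin_r.
    apply Rmult_le_compat_r with (r := K + 1) in H; [|lra].
    replace (gap / (2 * (K + 1)) * (K + 1)) with (gap / 2) in H by (field; lra). lra. }
  set (phi := phiP eps tau0 lamc Dc ga K).
  set (Phi := fun x t => phi x (sig tau0 t)).
  assert (HC : C21_test Phi).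
  { apply glue; auto. intros x t Ht. apply phiP_C21_at; auto. lra. }
  assert (Hcmp := compare_parab eps F hat ueps Phi Hvisc Hbuc HC).
  assert (H01 : Phi 0 1 <= ueps 0 1).
  { apply Hcmp; try lra.
    - intros x. unfold Phi. destruct (sig_pos tau0 0 Htau (Rle_refl 0)) as [-> _].
      unfold phi, phiP. replace (x - 0) with x by ring.
      pose proof (Vs_hat (Sq eps tau0 0) x (Sq_pos eps 0 He ltac:(lra))).
      assert (lamc * Vs (Sq eps tau0 0) x <= lamc * (2 * Bq * Rmax (1 - Rabs x) 0 + Vs (Sq eps tau0 0) 1))
        by (apply Rmult_le_compat_l; lra).
      assert (0 <= ga * (K * 0 + rho x)) by (apply Rmult_le_pos; [lra|]; pose proof (rho_ge x); pose proof (Rabs_pos x); lra).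
      unfold hat, Dc. replace (lamc * (2 * Bq * Rmax (1 - Rabs x) 0 + Vs (Sq eps tau0 0) 1))
        with ((lamc * (2 * Bq)) * Rmax (1 - Rabs x) 0 + lamc * Vs (Sq eps tau0 0) 1) in H0 by ring.
      rewrite Hlam in H0. lra.
    - exists (1 - Dc), ga. split; auto. intros x t Ht. unfold Phi. destruct (sig_pos tau0 t Htau Ht) as [-> _].
      unfold phi, phiP.
      pose proof (Vs_max (Sq eps tau0 t) (x - t) (Sq_pos eps t He ltac:(lra))).
      assert (lamc * Vs (Sq eps tau0 t) (x - t) <= lamc * (2 * Bq)) by (apply Rmult_le_compat_l; lra).
      pose proof (rho_ge x).
      assert (ga * (Rabs x + t) <= ga * (K * t + rho x)) by (apply Rmult_le_compat_l; nra).
      lra.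
    - intros x t Ht. destruct (sig_pos tau0 t Htau (Rlt_le _ _ Ht)) as [Hs1 Hs2].
      assert (Et : dt Phi x t = dt phi x t).
      { unfold Phi. rewrite dt_glue; auto. rewrite Hs1, Hs2. ring.
        rewrite Hs1. apply (phiP_C21_at eps tau0 lamc Dc ga K x t He ltac:(lra)). }
      assert (Ex : dx Phi x t = dx phi x t) by (unfold Phi, dx; rewrite Hs1; reflexivity).
      assert (Exx : dxx Phi x t = dxx phi x t).
      { unfold Phi, dxx, dx. rewrite Hs1. reflexivity. }
      rewrite Et, Ex, Exx. unfold phi.
      rewrite phiP_dt, phiP_dx, phiP_dxx by (auto; lra).
      set (S := Sq eps tau0 t).
      assert (HS : 0 < S) by (apply Sq_pos; auto; lra).
      pose proof (DVs_bound S (x - t) HS). 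
      set (p := lamc * DVs S (x - t)).
      assert (Hp : Rabs p <= 1).
      { unfold p. rewrite Rabs_mult, Rabs_right by lra. rewrite <- Hlam.
        apply Rmult_le_compat_l; lra. }
      pose proof (drho_range x) as Hdr. pose proof (d2rho_le1 x) as Hd2.
      set (q := p - ga * drho x).
      assert (Hq : Rabs (q - p) <= ga).
      { unfold q. replace (p - ga * drho x - p) with (- (ga * drho x)) by ring.
        rewrite Rabs_Ropp, Rabs_mult, (Rabs_right ga) by lra.
        assert (Rabs (drho x) <= 1) by (apply Rabs_le; lra). nra. }
      assert (HLq : Rabs (F q - F p) <= L * Rabs (q - p)).
      { apply Rabs_le_between in Hp. apply Rabs_le_between in Hq.
        apply HL; apply Rabs_le; lra. }
      assert (L * Rabs (q - p) <= Rabs L * ga).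
      { pose proof (Rle_abs L). pose proof (Rabs_pos (q - p)). pose proof (Rabs_pos L). nra. }
      apply Rabs_le_between in HLq.
      assert (HFp : F p <= p).
      { apply Rabs_le_between in Hp. destruct (Rle_dec p 0).
        - apply Hneg. lra.
        - rewrite HF by lra. apply Fpow_le; lra. }
      assert (eps * (ga * d2rho x) <= ga / 4).
      { assert (ga * d2rho x <= ga) by (pose proof (Rmult_le_compat_l ga _ _ (Rlt_le _ _ Hga) Hd2); lra).
        destruct (Rle_dec 0 (ga * d2rho x)). nra. nra. }
      fold q. unfold K.
      assert (E : lamc * (eps * D2Vs S (x - t) - DVs S (x - t)) - ga * (Rabs L + 1) + F q -
         eps * (lamc * D2Vs S (x - t) - ga * d2rho x) = -p - (Rabs L*ga + ga) + F q + eps*(ga*d2rho x))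
        by (unfold p; ring).
      rewrite E. lra. }
  unfold Phi in H01. destruct (sig_pos tau0 1 Htau ltac:(lra)) as [Hs1 _]. rewrite Hs1 in H01.
  unfold phi, phiP in H01. replace (0 - 1) with (-(1)) in H01 by ring. rewrite Vs_even in H01.
  assert (rho 0 = 1) by (unfold rho; replace (1 + 0*0) with 1 by ring; apply sqrt_1).
  rewrite H in H01. unfold gap in *. lra.
Qed.
Lemma PI_lb : 3.14 <= PI.
Proof.
  pose proof (PI_2_3_7_ineq 1) as [H _].
  unfold sum_f_R0, tg_alt, PI_2_3_7_tg, Ratan_seq in H. simpl in H. lra.
Qed.

Lemma einv_bounds : 0.367878 <= exp (-(1)) <= 0.36788.
Proof.
  pose proof e_bounds.
  assert (E : exp (-(1)) * exp 1 = 1) by (rewrite <- exp_plus; replace (-(1)+1) with 0 by ring; apply exp_0).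
  assert (0 < exp (-(1))) by apply exp_pos.
  split.
  - assert (0.367878 * exp 1 <= 1) by lra.
    apply Rmult_le_reg_r with (exp 1); lra.
  - assert (1 <= 0.36788 * exp 1) by lra.
    apply Rmult_le_reg_r with (exp 1); lra.
Qed.

Lemma exp_split1 d : exp (-(1 + d)) = exp (-(1)) * exp (-d).
Proof. rewrite <- exp_plus. f_equal. ring. Qed.

Lemma exp_pow4 a : exp (-(4*a)) = exp (-a) * exp (-a) * exp (-a) * exp (-a).
Proof. rewrite <- !exp_plus. f_equal. ring. Qed.

Lemma pow4_mono c z : 0 <= c <= z -> c*c*c*c <= z*z*z*z.
Proof.
  intros [H1 H2].
  assert (c*c <= z*z) by (apply Rmult_le_compat; lra).
  assert (c*c*c <= z*z*z) by (apply Rmult_le_compat; nra).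
  apply Rmult_le_compat; nra.
Qed.

Lemma Lam_low_eq h : 0 < h*h -> Lam_low h =
  1 + 2 * exp (-(4*(h*h))) - exp (-(h*h)) / (h*h) + exp (-(4*(h*h))) / (h*h).
Proof. intros. unfold Lam_low. unfold Rdiv. ring. Qed.

Lemma Lam_num h : 1/(1+tau0) <= h*h -> 0.68 <= Lam_low h.
Proof.
  intros HX. set (X := h*h) in *.
  assert (Ht : tau0 = 1/1000000) by reflexivity.
  assert (HX0 : 0 < X) by (rewrite Ht in HX; lra).
  rewrite Lam_low_eq by auto. fold X.
  set (e1 := exp (-X)). set (e4 := exp (-(4*X))).
  assert (He1 : 0 < e1) by apply exp_pos. assert (He4 : 0 < e4) by apply exp_pos.
  pose proof einv_bounds as [Ei1 Ei2].
  assert (Hdiv : forall a b, 0 < b -> a / b = a * / b) by (intros; reflexivity).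
  assert (HiX : 0 < / X) by (apply Rinv_0_lt_compat; auto).
  assert (HXi : X * / X = 1) by (field; lra).
  destruct (Rle_dec X 1.02) as [HA|HA].
  -
    assert (Hd : exp (-X) <= 0.3678808).
    { replace (-X) with (-(1 + (X - 1))) by lra. rewrite exp_split1.
      assert (exp (-(X-1)) <= 1.000002).
      { assert (1 - X <= tau0).
        { rewrite Ht in *. apply Rmult_le_compat_r with (r := 1 + 1/1000000) in HX; [|lra].
          replace (1 / (1 + 1 / 1000000) * (1 + 1 / 1000000)) with 1 in HX by field. nra. }
        assert (exp (-(X-1)) <= exp tau0) by (apply exp_le_exp; lra).
        pose proof (exp_ineq1_le (- tau0)).
        assert (E : exp (-tau0) * exp tau0 = 1) by (rewrite <- exp_plus; replace (-tau0+tau0) with 0 by ring; apply exp_0).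
        assert (0 < exp tau0) by apply exp_pos. rewrite Ht in *. nra. }
      assert (0 < exp (-(X-1))) by apply exp_pos. nra. }
    assert (HiXu : / X <= 1.000001).
    { rewrite Ht in HX. apply Rmult_le_reg_r with X; auto. rewrite Rmult_comm, HXi.
      apply Rmult_le_compat_r with (r := 1 + 1/1000000) in HX; [|lra].
      replace (1 / (1 + 1 / 1000000) * (1 + 1 / 1000000)) with 1 in HX by field. nra. }
    assert (HiXl : / 1.02 <= / X) by (apply Rinv_le_contravar; lra).
    assert (He4l : 0.016893 <= e4).
    { unfold e4. assert (Hq : exp (-(4*1.02)) <= exp (-(4*X))) by (apply exp_le_exp; lra).
      rewrite exp_pow4 in Hq.
      assert (exp (-(1.02)) >= 0.367878 * 0.98).
      { replace (-(1.02)) with (-(1 + 0.02)) by lra. rewrite exp_split1.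
        pose proof (exp_ineq1_le (-(0.02))). nra. }
      set (z := exp (-(1.02))) in *. pose proof (pow4_mono (0.367878 * 0.98) z ltac:(lra)). lra. }
    rewrite !Hdiv by auto. fold e1 in Hd.
    assert (e1 * / X <= 0.367882) by nra.
    assert (e4 * / 1.02 <= e4 * / X) by (apply Rmult_le_compat_l; lra).
    assert (/ 1.02 > 0.98039) by (apply Rmult_gt_reg_l with 1.02; [lra|]; rewrite Rinv_r; lra).
    nra.
  - destruct (Rle_dec X 1.1) as [HB|HB].
    +
      assert (Hd : exp (-X) <= 0.360596).
      { assert (exp (-X) <= exp (-(1.02))) by (apply exp_le_exp; lra).
        replace (-(1.02)) with (-(1 + 0.02)) in H by lra. rewrite exp_split1 in H.
        pose proof (exp_upper4 0.02 ltac:(lra)). assert (0 < exp (-(0.02))) by apply exp_pos. nra. }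
      assert (HiXu : / X <= / 1.02) by (apply Rinv_le_contravar; lra).
      assert (/ 1.02 < 0.980393) by (apply Rmult_lt_reg_l with 1.02; [lra|]; rewrite Rinv_r; lra).
      assert (HiXl : / 1.1 <= / X) by (apply Rinv_le_contravar; lra).
      assert (/ 1.1 > 0.909090) by (apply Rmult_gt_reg_l with 1.1; [lra|]; rewrite Rinv_r; lra).
      assert (He4l : 0.0120166 <= e4).
      { unfold e4. assert (Hq : exp (-(4*1.1)) <= exp (-(4*X))) by (apply exp_le_exp; lra).
        rewrite exp_pow4 in Hq.
        assert (exp (-(1.1)) >= 0.367878 * 0.9).
        { replace (-(1.1)) with (-(1 + 0.1)) by lra. rewrite exp_split1.
          pose proof (exp_ineq1_le (-(0.1))). nra. }
        set (z := exp (-(1.1))) in *. pose proof (pow4_mono (0.367878 * 0.9) z ltac:(lra)). lra. }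
      rewrite !Hdiv by auto. fold e1 in Hd.
      assert (e1 * / X <= e1 * 0.980393) by (apply Rmult_le_compat_l; lra).
      assert (e1 * / X <= 0.353527) by lra.
      assert (e4 * / 1.1 <= e4 * / X) by (apply Rmult_le_compat_l; lra).
      nra.
    +
      assert (Hd : exp (-X) <= 0.332875).
      { assert (exp (-X) <= exp (-(1.1))) by (apply exp_le_exp; lra).
        replace (-(1.1)) with (-(1 + 0.1)) in H by lra. rewrite exp_split1 in H.
        pose proof (exp_upper4 0.1 ltac:(lra)). assert (0 < exp (-(0.1))) by apply exp_pos.
        assert (exp (-(1)) * exp (-(0.1)) <= 0.36788 * (1 - 0.1 + 0.1 ^ 2 / 2 - 0.1 ^ 3 / 6 + 0.1 ^ 4 / 24))
          by (apply Rmult_le_compat; lra). lra. }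
      assert (HiXu : / X <= / 1.1) by (apply Rinv_le_contravar; lra).
      assert (/ 1.1 < 0.909091) by (apply Rmult_lt_reg_l with 1.1; [lra|]; rewrite Rinv_r; lra).
      rewrite !Hdiv by auto. fold e1 in Hd.
      assert (e1 * / X <= e1 * 0.909091) by (apply Rmult_le_compat_l; lra).
      assert (0 <= e4 * / X) by nra.
      nra.
Qed.
Lemma const_bound : 2 * ((exp 1 - 1) / (2 * sqrt PI * exp 1)) <= lamc * 0.676.
Proof.
  pose proof e_bounds as [E1 E2].
  assert (Hsp : 1.772 <= sqrt PI).
  { pose proof PI_lb. rewrite <- (sqrt_square 1.772) by lra. apply sqrt_le_1; lra. }
  assert (Hl : lamc * 0.676 >= 0.3628) by (unfold lamc, Bq; lra).
  assert (0 < exp 1) by lra.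
  replace (2 * ((exp 1 - 1) / (2 * sqrt PI * exp 1))) with ((exp 1 - 1) / (sqrt PI * exp 1)) by (field; lra).
  assert ((exp 1 - 1) / (sqrt PI * exp 1) <= 0.3568).
  { apply Rmult_le_reg_r with (sqrt PI * exp 1). nra.
    replace ((exp 1 - 1) / (sqrt PI * exp 1) * (sqrt PI * exp 1)) with (exp 1 - 1) by (field; lra).
    assert (0.3568 * (1.772 * exp 1) <= 0.3568 * (sqrt PI * exp 1)) by (apply Rmult_le_compat_l; [lra|]; apply Rmult_le_compat_r; lra).
    lra. }
  lra.
Qed.

Lemma value_bound eps : 0 < eps -> eps < 1/4 ->
  2 * ((exp 1 - 1) / (2 * sqrt PI * exp 1)) * sqrt eps <=
  lamc * Vs (Sq eps tau0 1) 1 - lamc * Vs (Sq eps tau0 0) 1.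
Proof.
  intros He He4.
  assert (Ht : tau0 = 1/1000000) by reflexivity.
  set (se := sqrt eps). assert (Hse : 0 < se) by (apply sqrt_lt_R0; auto).
  assert (HS1 : 0 < Sq eps tau0 1) by (apply Sq_pos; auto; rewrite Ht; lra).
  assert (HS0 : 0 < Sq eps tau0 0) by (apply Sq_pos; auto; rewrite Ht; lra).
  pose proof (Vs_1_lower _ HS1) as Hlow.
  pose proof (Vs_1_upper _ HS0) as Hup.
  assert (HL : 0.68 <= Lam_low (1 / Sq eps tau0 1)).
  { apply Lam_num. unfold Sq.
    assert (Hs2 : sqrt (eps * (1 + tau0)) * sqrt (eps * (1 + tau0)) = eps * (1 + tau0))
      by (apply sqrt_sqrt; rewrite Ht; nra).
    replace (1 / (2 * sqrt (eps * (1 + tau0))) * (1 / (2 * sqrt (eps * (1 + tau0)))))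
      with (1 / (4 * (eps * (1 + tau0)))).
    2: { assert (Hr : 0 < sqrt (eps * (1 + tau0))) by (apply sqrt_lt_R0; rewrite Ht; nra).
         set (r := sqrt (eps * (1 + tau0))) in *. rewrite <- Hs2. field. lra. }
    rewrite Ht. apply Rmult_le_reg_r with (4 * (eps * (1 + 1/1000000))). nra.
    replace (1 / (4 * (eps * (1 + 1 / 1000000))) * (4 * (eps * (1 + 1 / 1000000)))) with 1 by (field; lra).
    replace (1 / (1 + 1 / 1000000) * (4 * (eps * (1 + 1 / 1000000)))) with (4 * eps) by field. lra. }
  assert (HS1h : se <= Sq eps tau0 1 / 2).
  { unfold Sq. replace (2 * sqrt (eps * (1 + tau0)) / 2) with (sqrt (eps * (1 + tau0))) by field.
    apply sqrt_le_1; try rewrite Ht; nra. }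
  assert (HS0v : Sq eps tau0 0 = 2 * se / 1000).
  { unfold Sq. replace (0 + tau0) with tau0 by ring. rewrite sqrt_mult by (try rewrite Ht; lra).
    rewrite Ht. replace (1/1000000) with ((1/1000) * (1/1000)) by field. rewrite sqrt_square by lra.
    unfold se. field. }
  assert (Hlam0 : 0 < lamc) by (unfold lamc, Bq; lra).
  assert (A1 : se * 0.68 <= Sq eps tau0 1 / 2 * Lam_low (1 / Sq eps tau0 1)).
  { apply Rmult_le_compat; lra. }
  assert (A2 : lamc * (se * 0.68) <= lamc * Vs (Sq eps tau0 1) 1) by (apply Rmult_le_compat_l; lra).
  assert (A3 : lamc * Vs (Sq eps tau0 0) 1 <= lamc * (4 * se / 1000)).
  { apply Rmult_le_compat_l; [lra|]. lra. }
  pose proof const_bound.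
  assert (2 * ((exp 1 - 1) / (2 * sqrt PI * exp 1)) * se <= lamc * 0.676 * se)
    by (apply Rmult_le_compat_r; lra).
  lra.
Qed.

Theorem proposition4p3 (eps m : R) (F : R -> R) (ueps u : R -> R -> R) :
  0 < eps -> eps < 1/4 ->
  1 < m ->
  1 - 1/m <= (exp 1 - 1) / (2 * sqrt PI * exp 1) * sqrt eps ->
  loc_lipschitz F ->
  F 0 = 0 ->
  (forall p, 0 < p <= 1 -> F p = Rpower p m / m) ->
  (forall p, -1 <= p <= 0 -> F p <= p) ->
  BUC ueps -> visc_sol_parabolic eps F hat ueps ->
  BUC u -> visc_sol_HJ F hat u ->
  Rabs (ueps 0 1 - u 0 1) >= (exp 1 - 1) / (2 * sqrt PI * exp 1) * sqrt eps.
Proof.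
  intros He He4 Hm Heta Hlip HF0 HF Hneg Hb1 Hv1 Hb2 Hv2.
  pose proof (HJ_bound m F u Hm Hlip HF Hb2 Hv2) as Hu.
  pose proof (parab_bound eps m F ueps He He4 Hm Hlip HF Hneg Hb1 Hv1) as Hp.
  pose proof (value_bound eps He He4) as Hv.
  set (c := (exp 1 - 1) / (2 * sqrt PI * exp 1)) in *.
  assert (0 <= c * sqrt eps).
  { assert (0 < 1/m) by (apply Rdiv_lt_0_compat; lra).
    assert (1/m < 1) by (apply Rmult_lt_reg_r with m; [lra|]; field_simplify; lra). lra. }
  rewrite Rabs_right; lra.
Qed.
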